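(* Let $z$ be a binomial random variable with parameters $n\ge1$ and $\nu\in[0,1]$. For any $c\ge1$ with $c\nu<1$ and any $\lambda\in\big[0,\frac{\ln c}{(1-c\nu)(4n-3)}\big]$, $\mathbb{E}e^{\lambda z^2}\le e^{cn\nu(1+cn\nu)\lambda}$. *)

(* Defs.v *)
From Stdlib Require Import Reals.
Open Scope R_scope.

Definition binom_pmf (n : nat) (nu : R) (k : nat) : R :=
  C n k * nu ^ k * (1 - nu) ^ (n - k).

Definition binom_expect (n : nat) (nu : R) (f : R -> R) : R :=
  sum_f_R0 (fun k => binom_pmf n nu k * f (INR k)) n.

(* Main.v *)
Require Import Defs.
From Stdlib Require Import Reals Lra Lia Psatz.
Open Scope R_scope.

Lemma exp_le' x y : x <= y -> exp x <= exp y.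
Proof. intros [H|H]. left; now apply exp_increasing. subst; lra. Qed.

Lemma exp_chord a y : 0 <= a <= 1 -> exp (a*y) <= 1 + a*(exp y - 1).
Proof.
  intros Ha.
  pose proof (exp_ineq1_le (-(a*y))) as H0.
  pose proof (exp_ineq1_le ((1-a)*y)) as H1.
  assert (E0 : exp (a*y) * exp (-(a*y)) = 1).
  { rewrite <- exp_plus. replace (a*y + -(a*y)) with 0 by ring. apply exp_0. }
  assert (E1 : exp (a*y) * exp ((1-a)*y) = exp y).
  { rewrite <- exp_plus. f_equal; ring. }
  pose proof (exp_pos (a*y)).
  assert (exp (a*y) * (1 - a*y) <= 1) by nra.
  assert (exp (a*y) * (1 + (1-a)*y) <= exp y) by nra.
  nra.
Qed.

Lemma key nu c y : 0 <= nu -> 1 <= c -> c*nu < 1 -> 0 <= y -> (1 - c*nu)*y <= ln c ->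
  1 - nu + nu * exp y <= exp (c*nu*y).
Proof.
  intros Hnu Hc Hp Hy Hl.
  set (a := 1 - c*nu).
  assert (Ea : exp (a*y) <= c).
  { rewrite <- (exp_ln c) by lra. apply exp_le'. exact Hl. }
  assert (Ch : exp (a*y) <= 1 + a*(exp y - 1)).
  { apply exp_chord. unfold a; nra. }
  assert (Ey : 1 <= exp y) by (pose proof (exp_ineq1_le y); lra).
  assert (E : exp (c*nu*y) * exp (a*y) = exp y).
  { rewrite <- exp_plus. f_equal; unfold a; ring. }
  pose proof (exp_pos (a*y)). pose proof (exp_pos (c*nu*y)).
  assert (exp (a*y) * (1 - nu + nu*exp y) <= exp (a*y) * exp (c*nu*y)).
  { assert (exp (a*y) * (nu * (exp y - 1)) <= c * (nu*(exp y - 1))).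
    { apply Rmult_le_compat_r; nra. }
    unfold a in *. nra. }
  nra.
Qed.

Definition T (m : nat) (nu : R) (f : nat -> R) : R :=
  sum_f_R0 (fun k => binom_pmf m nu k * f k) m.

Lemma Cnn n : C n n = 1.
Proof.
  unfold C. rewrite Nat.sub_diag. change (INR (Factorial.fact 0)) with 1. rewrite Rmult_1_r.
  field. apply INR_fact_neq_0.
Qed.

Lemma Cn0 n : C n 0 = 1.
Proof.
  unfold C. rewrite Nat.sub_0_r. change (INR (Factorial.fact 0)) with 1. rewrite Rmult_1_l.
  field. apply INR_fact_neq_0.
Qed.

Lemma T_rec m nu f : T (S m) nu f = (1 - nu) * T m nu f + nu * T m nu (fun k => f (S k)).
Proof.
  unfold T, binom_pmf.
  set (a := fun k => if (k <=? m)%nat then C m k * nu ^ k * (1 - nu) ^ (m - k) * f k else 0).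
  set (b := fun k => match k with O => 0 | S j => C m j * nu ^ j * (1 - nu) ^ (m - j) * f (S j) end).
  assert (Hs : sum_f_R0 (fun k => C (S m) k * nu ^ k * (1 - nu) ^ (S m - k) * f k) (S m)
     = sum_f_R0 (fun k => (1 - nu) * a k + nu * b k) (S m)).
  { apply sum_eq. intros k Hk. unfold a, b.
    destruct k as [|j].
    - simpl. rewrite !Cn0, Nat.sub_0_r. ring.
    - destruct (Nat.eq_dec j m) as [->|Hj].
      + replace (S m <=? m)%nat with false by (symmetry; apply Nat.leb_gt; lia).
        rewrite !Nat.sub_diag, !Cnn. simpl. ring.
      + replace (S j <=? m)%nat with true by (symmetry; apply Nat.leb_le; lia).
        rewrite <- pascal by lia.
        replace (S m - S j)%nat with (m - j)%nat by lia.
        replace (m - j)%nat with (S (m - S j)) by lia. simpl. ring. }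
  rewrite Hs, plus_sum.
  assert (E1 : sum_f_R0 (fun k => (1 - nu) * a k) (S m) = (1 - nu) * sum_f_R0 a (S m)).
  { rewrite scal_sum. apply sum_eq. intros; ring. }
  assert (E2 : sum_f_R0 (fun k => nu * b k) (S m) = nu * sum_f_R0 b (S m)).
  { rewrite scal_sum. apply sum_eq. intros; ring. }
  rewrite E1, E2. clear E1 E2 Hs.
  rewrite tech5. rewrite (decomp_sum b (S m)) by lia. simpl pred.
  assert (Ha : a (S m) = 0).
  { unfold a. replace (S m <=? m)%nat with false by (symmetry; apply Nat.leb_gt; lia). reflexivity. }
  rewrite Ha. replace (b 0%nat) with 0 by reflexivity.
  rewrite Rplus_0_r, Rplus_0_l. f_equal; f_equal; apply sum_eq; intros i Hi; unfold a, b.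
  - replace (i <=? m)%nat with true by (symmetry; apply Nat.leb_le; lia). reflexivity.
Qed.

Lemma T_scal m nu K g : T m nu (fun k => K * g k) = K * T m nu g.
Proof. unfold T. rewrite scal_sum. apply sum_eq. intros; ring. Qed.

Lemma T_ext m nu f g : (forall k, f k = g k) -> T m nu f = T m nu g.
Proof. intros H. unfold T. apply sum_eq. intros; now rewrite H. Qed.

Lemma main_ind nu c lambda : 0 <= nu <= 1 -> 1 <= c -> c * nu < 1 -> 0 <= lambda ->
  forall m mu, 0 <= mu -> (1 - c*nu) * (mu + 2*lambda*INR m) <= ln c + (1 - c*nu)*lambda ->
  T m nu (fun k => exp (lambda * INR k ^ 2 + mu * INR k))
   <= exp (c*nu*INR m*mu + lambda*(c*nu)*INR m*(1 + c*nu*INR m)).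
Proof.
  intros Hnu Hc Hp Hl m. induction m as [|m IH]; intros mu Hmu Hcond.
  - unfold T, binom_pmf. simpl. rewrite Cn0.
    replace (lambda * (0 * (0 * 1)) + mu * 0) with 0 by ring.
    replace (c * nu * 0 * mu + lambda * (c * nu) * 0 * (1 + c * nu * 0)) with 0 by ring.
    rewrite exp_0. lra.
  - rewrite T_rec.
    cbv beta. rewrite (T_ext m nu (fun k => exp (lambda * INR (S k) ^ 2 + mu * INR (S k))) (fun k => exp (lambda + mu) * exp (lambda * INR k ^ 2 + (mu + 2*lambda) * INR k))).
    2:{ intros k. rewrite <- exp_plus. f_equal. rewrite S_INR. ring. }
    rewrite T_scal.
    set (p := c*nu). set (x := INR m).
    assert (Hx : 0 <= x) by apply pos_INR.
    rewrite S_INR in Hcond |- *. fold x in Hcond |- *.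
    assert (Hp0 : 0 <= p) by (unfold p; nra).
    assert (Hpl : 0 <= (1 - p) * lambda) by (apply Rmult_le_pos; unfold p; lra).
    assert (H1 := IH mu Hmu ltac:(unfold p, x in *; nra)).
    assert (H2 := IH (mu + 2*lambda) ltac:(lra) ltac:(unfold p, x in *; nra)).
    fold p x in H1, H2.
    set (A := p*x*mu + lambda*p*x*(1+p*x)) in *.
    set (y := lambda + mu + 2*lambda*p*x).
    assert (EA2 : exp (p*x*(mu+2*lambda) + lambda*p*x*(1+p*x)) = exp A * exp (2*lambda*p*x)).
    { rewrite <- exp_plus. f_equal. unfold A. ring. }
    assert (EB : exp (p*(x+1)*mu + lambda*p*(x+1)*(1+p*(x+1))) = exp A * exp (p*y) * exp (lambda*p^2)).
    { rewrite <- !exp_plus. f_equal. unfold A, y. ring. }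
    assert (Ey : exp (lambda + mu) * exp (2*lambda*p*x) = exp y).
    { rewrite <- exp_plus. f_equal; try (unfold y; ring). }
    rewrite EA2 in H2. rewrite EB.
    assert (Hlpx : 0 <= lambda*p*x) by (repeat apply Rmult_le_pos; lra).
    assert (Hlx : lambda*p*x <= lambda*x).
    { assert (0 <= lambda*x) by (apply Rmult_le_pos; lra). assert (p <= 1) by (unfold p; lra). nra. }
    assert (Hy0 : 0 <= y) by (unfold y; lra).
    assert (Hyl : (1 - p) * y <= ln c).
    { assert ((1-p)*y <= (1-p)*(mu + lambda + 2*lambda*x)).
      { apply Rmult_le_compat_l. unfold p; lra. unfold y; lra. }
      fold p in Hcond. nra. }
    assert (K := key nu c y ltac:(lra) Hc Hp Hy0 Hyl).
    fold p in K.
    assert (Hl2 : 1 <= exp (lambda * p^2)) by (pose proof (exp_ineq1_le (lambda*p^2)); nra).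
    pose proof (exp_pos A). pose proof (exp_pos (p*y)). pose proof (exp_pos (lambda+mu)).
    assert (S1 : (1 - nu) * T m nu (fun k => exp (lambda * INR k ^ 2 + mu * INR k)) <= (1-nu) * exp A)
      by (apply Rmult_le_compat_l; lra).
    assert (S2 : nu * (exp (lambda + mu) * T m nu (fun k => exp (lambda * INR k ^ 2 + (mu + 2*lambda) * INR k)))
       <= nu * (exp (lambda + mu) * (exp A * exp (2*lambda*p*x)))).
    { apply Rmult_le_compat_l; [lra|]. apply Rmult_le_compat_l; lra. }
    assert (exp A * (1 - nu + nu * exp y) <= exp A * exp (p*y)) by (apply Rmult_le_compat_l; lra).
    assert (exp A * exp (p*y) <= exp A * exp (p*y) * exp (lambda*p^2)).
    { assert (0 < exp A * exp (p*y)) by (apply Rmult_lt_0_compat; assumption).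
      pattern (exp A * exp (p*y)) at 1. rewrite <- (Rmult_1_r (exp A * exp (p*y))).
      apply Rmult_le_compat_l; lra. }
    rewrite <- Ey in *. nra.
Qed.

Theorem lemma7 (n : nat) (nu c lambda : R) :
  (1 <= n)%nat ->
  0 <= nu <= 1 ->
  1 <= c ->
  c * nu < 1 ->
  0 <= lambda <= ln c / ((1 - c * nu) * (4 * INR n - 3)) ->
  binom_expect n nu (fun z => exp (lambda * z ^ 2))
    <= exp (c * INR n * nu * (1 + c * INR n * nu) * lambda).
Proof.
  intros Hn Hnu Hc Hp [Hl0 Hl].
  assert (Hn1 : 1 <= INR n) by (apply (le_INR 1); exact Hn).
  assert (HD : 0 < (1 - c * nu) * (4 * INR n - 3)) by (apply Rmult_lt_0_compat; lra).
  assert (HlD : lambda * ((1 - c * nu) * (4 * INR n - 3)) <= ln c).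
  { apply (Rmult_le_compat_r ((1 - c * nu) * (4 * INR n - 3))) in Hl; [|lra].
    unfold Rdiv in Hl. rewrite Rmult_assoc, Rinv_l in Hl by lra. lra. }
  assert (Hcond : (1 - c*nu) * (0 + 2*lambda*INR n) <= ln c + (1 - c*nu)*lambda).
  { assert (0 <= (1 - c*nu)*lambda) by (apply Rmult_le_pos; lra).
    assert (0 <= (1 - c*nu)*lambda * (2*INR n - 2)) by (apply Rmult_le_pos; lra).
    nra. }
  pose proof (main_ind nu c lambda Hnu Hc Hp Hl0 n 0 (Rle_refl 0) Hcond) as H.
  unfold binom_expect.
  change (sum_f_R0 (fun k => binom_pmf n nu k * exp (lambda * INR k ^ 2)) n)
    with (T n nu (fun k => exp (lambda * INR k ^ 2))).
  rewrite (T_ext n nu _ (fun k => exp (lambda * INR k ^ 2 + 0 * INR k)))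
    by (intros k; f_equal; ring).
  eapply Rle_trans; [exact H|]. right. f_equal. ring.
Qed.
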